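(* For $m,n,s\in\mathbb{N}$, $${}_{s+1}F_s\left(\{\tfrac12\}^{s},1-n;\{\tfrac32\}^{s};1\right)=\sum_{k=1}^n(-1)^{k-1}\binom{n}{k}\overline{H}_k(s),$$ $${}_{s+1}F_s\left(\{\tfrac12\}^{s},1-n;\{\tfrac32\}^{s};-1\right)=\sum_{k=1}^n(-1)^{k-1}\binom{n}{k}\overline{H}_k(\overline{s}),$$ and $${}_2F_1(1,1-n;m+n;-1)=(m-1)!\,(m+n-1)\sum_{k=1}^n(-1)^{k-1}\binom{n}{k}G_{m,k}.$$
   Context: $\mathbb{N}$ is the set of positive integers; $\{a\}^s$ denotes $a$ repeated $s$ times. $\overline{H}_k(s)=\sum_{j=0}^{k-1}\frac{1}{(2j+1)^s}$, $\overline{H}_k(\overline{s})=\sum_{j=0}^{k-1}\frac{(-1)^j}{(2j+1)^s}$, and $G_{m,k}=\sum_{j=0}^{k-1}\frac{1}{(2j+1)(2j+2)\cdots(2j+m)}$. ${}_{s+1}F_s(a_1,\ldots,a_{s+1};b_1,\ldots,b_s;x)=\sum_{i\geq 0}\frac{(a_1)_i\cdots(a_{s+1})_i}{(b_1)_i\cdots(b_s)_i}\frac{x^i}{i!}$, with $(a)_0=1$, $(a)_i=a(a+1)\cdots(a+i-1)$ for $i>0$ (a finite sum here since $1-n\leq 0$ is an integer). *)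

(* Defs.v *)
From HB Require Import structures.
From mathcomp Require Import all_boot all_order all_algebra.
Set Implicit Arguments. Unset Strict Implicit. Unset Printing Implicit Defensive.
Import Order.TTheory GRing.Theory Num.Theory.
Local Open Scope ring_scope.

Definition poch {R : ringType} (a : R) (i : nat) : R :=
  \prod_(k < i) (a + k%:R).

Definition hypterm {R : fieldType} (as_ bs : seq R) (x : R) (i : nat) : R :=
  (\prod_(a <- as_) poch a i) / (\prod_(b <- bs) poch b i) * x ^+ i / (i`!)%:R.

(* When an upper parameter is
   1 - n with n >= 1, all terms with i >= n vanish, so for N >= n this is the
   value of the (terminating) hypergeometric series. *)
Definition hypF {R : fieldType} (as_ bs : seq R) (x : R) (N : nat) : R :=
  \sum_(i < N) hypterm as_ bs x i.

Definition Hbar {R : fieldType} (k s : nat) : R :=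
  \sum_(j < k) 1 / ((2 * j + 1)%:R ^+ s).

Definition Hbar_alt {R : fieldType} (k s : nat) : R :=
  \sum_(j < k) (-1) ^+ j / ((2 * j + 1)%:R ^+ s).

Definition Gmk {R : fieldType} (m k : nat) : R :=
  \sum_(j < k) 1 / (\prod_(1 <= i < m.+1) (2 * j + i)%:R).

(* Main.v *)
Require Import Defs.
From HB Require Import structures.
From mathcomp Require Import all_boot all_order all_algebra.
From mathcomp Require Import ring lra zify.
Import Order.TTheory GRing.Theory Num.Theory.
Local Open Scope ring_scope.

Section Aux.
Variable R : realFieldType.

Lemma prod_nseq (s : nat) (a : R) (i : nat) :
  \prod_(b <- nseq s a) poch b i = poch a i ^+ s.
Proof. by rewrite big_nseq; elim: s => [|s IH] //=; rewrite IH exprS. Qed.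

Lemma pochS (a : R) i : poch a i.+1 = poch a i * (a + i%:R).
Proof. by rewrite /poch big_ord_recr. Qed.

Lemma pochSl (a : R) i : poch a i.+1 = a * poch (a + 1) i.
Proof.
rewrite /poch big_ord_recl /= addr0; congr (_ * _).
by apply: eq_bigr => k _; rewrite /bump leq0n add1n -natr1; ring. Qed.

Lemma poch_neg (n i : nat) :
  poch (- n%:R : R) i = (-1) ^+ i * ('C(n, i) * i`!)%:R.
Proof.
rewrite bin_ffact; elim: i => [|i IH]; first by rewrite /poch big_ord0 expr0 mul1r ffactn0.
rewrite pochS IH ffactnSr natrM exprS.
case: (leqP i n) => H.
  rewrite natrB //; ring.
by rewrite (ffact_small H) mulr0n; ring.
Qed.

Lemma poch_one (i : nat) : poch (1 : R) i = i`!%:R.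
Proof.
elim: i => [|i IH]; first by rewrite /poch big_ord0.
by rewrite pochS IH factS natrM mulrC -natr1 addrC.
Qed.

Lemma poch_nat (c i : nat) : poch ((c.+1)%:R : R) i = (c + i)`!%:R / c`!%:R.
Proof.
have Hc : (c`!%:R : R) != 0 by rewrite pnatr_eq0 -lt0n fact_gt0.
elim: i => [|i IH]; first by rewrite /poch big_ord0 addn0 divff.
rewrite pochS IH addnS factS natrM -natrD addSn; field => //.
Qed.

Lemma poch_half (i : nat) : poch (3 / 2 : R) i = poch (1 / 2) i * (2 * i + 1)%:R.
Proof.
have := pochSl (1 / 2 : R) i; rewrite pochS.
have -> : (1 / 2 + 1 : R) = 3 / 2 by field.
move=> H.
have H2 : (1 / 2 : R) != 0 by rewrite mul1r invr_eq0 pnatr_eq0.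
apply: (mulfI H2); rewrite -H natrD natrM; by field.
Qed.

Lemma poch_half_gt0 (i : nat) : 0 < poch (1 / 2 : R) i.
Proof.
apply: prodr_gt0 => k _; apply: ltr_wpDr => //; by rewrite mul1r invr_gt0 ltr0n.
Qed.


Lemma altC (n j : nat) :
  \sum_(0 <= k < j.+1) (-1) ^+ k * ('C(n.+1, k))%:R = (-1) ^+ j * ('C(n, j))%:R :> R.
Proof.
elim: j => [|j IH]; first by rewrite big_nat1 !bin0.
rewrite big_nat_recr //= IH binS natrD exprS; ring.
Qed.

Lemma altC_tail (n j : nat) : (j <= n)%N ->
  \sum_(j.+1 <= k < n.+2) (-1) ^+ (k - 1) * ('C(n.+1, k))%:R = (-1) ^+ j * ('C(n, j))%:R :> R.
Proof.
move=> Hj.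
have H0 := altC n n.+1. rewrite bin_small // mulr0 in H0.
have H1 := altC n j.
rewrite (big_cat_nat _ (n:=j.+1)) //= in H0; last by rewrite ltnS ltnW.
rewrite H1 in H0.
have -> : \sum_(j.+1 <= k < n.+2) (-1) ^+ (k - 1) * ('C(n.+1, k))%:R =
   - \sum_(j.+1 <= k < n.+2) (-1) ^+ k * ('C(n.+1, k))%:R :> R.
  rewrite -sumrN big_nat_cond [RHS]big_nat_cond; apply: eq_bigr => k /andP[/andP[Hk _] _].
  case: k Hk => // k _; rewrite subn1 /= exprS; ring.
by move/eqP: H0; rewrite addr_eq0 => /eqP ->.
Qed.

Lemma swapL (n : nat) (a : nat -> R) :
  \sum_(1 <= k < n.+2) (-1) ^+ (k - 1) * ('C(n.+1, k))%:R * (\sum_(j < k) a j)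
  = \sum_(j < n.+1) (-1) ^+ j * ('C(n, j))%:R * a j.
Proof.
have E : forall k, (k <= n.+1)%N ->
   \sum_(j < k) a j = \sum_(0 <= j < n.+1) (if (j < k)%N then a j else 0).
  move=> k Hk; rewrite -(big_mkord xpredT a) (big_nat_widen _ _ _ _ _ Hk) big_mkcond /=.
  by apply: eq_bigr => j _.
rewrite big_nat_cond (eq_bigr (fun k => \sum_(0 <= j < n.+1)
    (-1) ^+ (k - 1) * ('C(n.+1, k))%:R * (if (j < k)%N then a j else 0))); last first.
  move=> k /andP[/andP[_ Hk] _]; rewrite E // mulr_sumr //.
rewrite -big_nat_cond exchange_big /= big_mkord.
apply: eq_bigr => j _.
rewrite (big_cat_nat _ (n:=j.+1)) //=; last by rewrite ltnS ltnW // ltnS.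
rewrite big_nat_cond big1 ?add0r; last first.
  by move=> k /andP[/andP[_ Hk] _]; rewrite ltnNge -ltnS Hk mulr0.
rewrite big_nat_cond (eq_bigr (fun k => (-1) ^+ (k - 1) * ('C(n.+1, k))%:R * a j)); last first.
  by move=> k /andP[/andP[Hk _] _]; rewrite Hk.
rewrite -big_nat_cond -mulr_suml altC_tail //.
by rewrite -ltnS.
Qed.


Definition Iw (K : nat) (p : {poly R}) : R := \sum_(a < K) p`_a / (a.+1)%:R.

Lemma IwD K p q : Iw K (p + q) = Iw K p + Iw K q.
Proof. by rewrite /Iw -big_split; apply: eq_bigr => a _; rewrite coefD mulrDl. Qed.

Lemma IwN K p : Iw K (- p) = - Iw K p.
Proof. by rewrite /Iw -sumrN; apply: eq_bigr => a _; rewrite coefN mulNr. Qed.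

Lemma IwB K p q : Iw K (p - q) = Iw K p - Iw K q.
Proof. by rewrite IwD IwN. Qed.

Lemma IwMn K p k : Iw K (p *+ k) = Iw K p *+ k.
Proof. by rewrite /Iw -sumrMnl; apply: eq_bigr => a _; rewrite coefMn mulrnAl. Qed.

Lemma Iwsign K p j : Iw K ((-1) ^+ j * p) = (-1) ^+ j * Iw K p.
Proof.
case: (odd j) (signr_odd {poly R} j) (signr_odd R j) => /= <- <-.
  by rewrite !expr1 !mulN1r IwN.
by rewrite !expr0 !mul1r.
Qed.

Lemma Iwsum K n (F : 'I_n -> {poly R}) : Iw K (\sum_(j < n) F j) = \sum_(j < n) Iw K (F j).
Proof.
rewrite /Iw (eq_bigr (fun a : 'I_K => \sum_(j < n) (F j)`_a / (a.+1)%:R)).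
  by rewrite exchange_big.
by move=> a _; rewrite coef_sum mulr_suml.
Qed.

Definition beta (a b : nat) : R := (a`! * b`!)%:R / ((a + b).+1)`!%:R.

Lemma Iw_beta K b a : (a + b < K)%N -> Iw K ('X^a * (1 - 'X) ^+ b) = beta a b.
Proof.
elim: b a => [|b IH] a Hab.
  rewrite addn0 in Hab.
  rewrite expr0 mulr1 /beta /Iw addn0 fact0 muln1.
  rewrite (bigD1 (Ordinal Hab)) //= big1 ?addr0; last first.
    move=> i /eqP Hi; rewrite coefXn; case: eqP => He; last by rewrite mul0r.
    by case: Hi; apply: val_inj.
  rewrite coefXn eqxx factS natrM /=.
  have Hf : (a`!%:R : R) != 0 by rewrite pnatr_eq0 -lt0n fact_gt0.
  by field; rewrite Hf addrC natr1 pnatr_eq0.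
rewrite exprS mulrBl mul1r mulrBr mulrA -exprSr IwB IH; last by rewrite ltnW // -addnS.
rewrite IH; last by rewrite addSn -addnS.
rewrite /beta addSn addnS !factS !natrM.
have H3 : ((a + b)`!%:R : R) != 0 by rewrite pnatr_eq0 -lt0n fact_gt0.
have H1 : ((a + b).+1%:R : R) != 0 by rewrite pnatr_eq0.
have H2 : ((a + b).+2%:R : R) != 0 by rewrite pnatr_eq0.
move: H1 H2; rewrite -!natr1 !natrD => H1 H2.
by field; rewrite H1 H2 H3.
Qed.


Lemma KL n m : \sum_(j < n.+1) (-1) ^+ j * ('C(n, j))%:R * beta (2 * j) m
  = \sum_(i < n.+1) ('C(n, i))%:R * beta i (m + n).
Proof.
pose K := (2 * n + m).+1.
transitivity (Iw K ((- 'X^2 + 1) ^+ n * (1 - 'X) ^+ m)).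
  rewrite exprD1n mulr_suml Iwsum; apply: eq_bigr => j _.
  rewrite mulrnAl IwMn (exprNn ('X^2 : {poly R})) -exprM -[in RHS]mulrA Iwsign Iw_beta; last first.
    have := ltn_ord j; rewrite /K; lia.
  by rewrite -mulr_natl; ring.
have -> : (- 'X^2 + 1 : {poly R}) = ('X + 1) * (1 - 'X) by ring.
rewrite exprMn -mulrA -exprD addnC.
rewrite exprD1n mulr_suml Iwsum; apply: eq_bigr => i _.
rewrite [in LHS]mulrnAl IwMn Iw_beta; last first.
  have := ltn_ord i; rewrite /K; lia.
by rewrite mulr_natl.
Qed.


Lemma sum_trunc (f : nat -> R) n N : (n <= N)%N -> (forall i, (n <= i)%N -> f i = 0) ->
  \sum_(i < N) f i = \sum_(i < n) f i.
Proof.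
move=> HN Hf; rewrite -(subnKC HN) big_split_ord /= [X in _ + X]big1 ?addr0 //.
by move=> i _; apply: Hf; rewrite leq_addr.
Qed.

Lemma one_sub_nat n : (1 - n.+1%:R : R) = - n%:R.
Proof. by rewrite -natr1; ring. Qed.

Lemma hyp12 (s n : nat) (x : R) i :
  hypterm (rcons (nseq s (1 / 2)) (1 - n.+1%:R)) (nseq s (3 / 2)) x i
  = (-1) ^+ i * ('C(n, i))%:R * (x ^+ i / (2 * i + 1)%:R ^+ s).
Proof.
rewrite /hypterm big_rcons /= !prod_nseq one_sub_nat poch_neg poch_half exprMn natrM.
have HP : poch (1 / 2 : R) i != 0 by rewrite gt_eqF // poch_half_gt0.
have Hf : (i`!%:R : R) != 0 by rewrite pnatr_eq0 -lt0n fact_gt0.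
have H2 : ((2 * i + 1)%:R : R) != 0 by rewrite pnatr_eq0 addn1.
by field; rewrite (expf_neq0 _ H2) (expf_neq0 _ HP) Hf.
Qed.

Lemma hyp3 (m n : nat) i :
  hypterm [:: 1; 1 - n.+1%:R] [:: (m.+1 + n.+1)%:R] (-1 : R) i
  = ('C(n, i))%:R * ((m + n).+1%:R * beta i (m + n)).
Proof.
rewrite /hypterm !big_cons !big_nil !mulr1 poch_one one_sub_nat poch_neg addSn addnS poch_nat.
rewrite /beta (addSn (m + n) i) (addnC (m + n) i) (factS (m + n)) !natrM.
have Hf : (i`!%:R : R) != 0 by rewrite pnatr_eq0 -lt0n fact_gt0.
have Hg : ((m + n)`!%:R : R) != 0 by rewrite pnatr_eq0 -lt0n fact_gt0.
have Hh : ((i + (m + n)).+1`!%:R : R) != 0 by rewrite pnatr_eq0 -lt0n fact_gt0.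
have HM : ((m + n).+1%:R : R) != 0 by rewrite pnatr_eq0.
have Hk : ((i + (m + n))`!%:R : R) != 0 by rewrite pnatr_eq0 -lt0n fact_gt0.
have Hl : (1 + (i%:R + (m%:R + n%:R)) : R) != 0.
  by rewrite (_ : 1 = 1%:R :> R) // -!natrD pnatr_eq0 add1n.
have Hl2 : (1 + (m%:R + n%:R) : R) != 0.
  by rewrite (_ : 1 = 1%:R :> R) // -!natrD pnatr_eq0 add1n.
case: (odd i) (signr_odd R i) => /= <-; rewrite ?expr1 ?expr0.
  by field; rewrite Hk Hl Hf Hg Hl2.
by field; rewrite Hk Hl Hf Hg Hl2.
Qed.

Lemma prod_fact c M : (c`! * \prod_(1 <= i < M.+1) (c + i) = (c + M)`!)%N.
Proof.
elim: M => [|M IH]; first by rewrite big_geq // addn0 muln1.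
by rewrite big_nat_recr //= mulnA IH addnS factS mulnC.
Qed.

Lemma gbeta m j : m`!%:R * (1 / \prod_(1 <= i < m.+2) ((2 * j + i)%:R : R)) = beta (2 * j) m.
Proof.
rewrite -natr_prod /beta -addnS -(prod_fact (2 * j) m.+1) !natrM.
have : (0 < (2 * j + m.+1)`!)%N := fact_gt0 _.
rewrite -prod_fact muln_gt0 => /andP[_ HP].
have Hf : ((2 * j)`!%:R : R) != 0 by rewrite pnatr_eq0 -lt0n fact_gt0.
have Hp : ((\prod_(1 <= i < m.+2) (2 * j + i))%:R : R) != 0 by rewrite pnatr_eq0 -lt0n.
by field; rewrite Hp Hf.
Qed.

End Aux.

Theorem corollary3p6 (R : realFieldType) (m n s : nat) :
  (0 < m)%N -> (0 < n)%N -> (0 < s)%N ->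
  forall N : nat, (n <= N)%N ->
  [/\ hypF (rcons (nseq s (1 / 2 : R)) (1 - n%:R)) (nseq s (3 / 2 : R)) 1 N
        = \sum_(1 <= k < n.+1) (-1) ^+ (k - 1) * 'C(n, k)%:R * Hbar k s,
      hypF (rcons (nseq s (1 / 2 : R)) (1 - n%:R)) (nseq s (3 / 2 : R)) (-1) N
        = \sum_(1 <= k < n.+1) (-1) ^+ (k - 1) * 'C(n, k)%:R * Hbar_alt k s
    & hypF [:: 1; 1 - n%:R] [:: (m + n)%:R] (-1 : R) N
        = (m.-1)`!%:R * (m + n - 1)%:R *
          \sum_(1 <= k < n.+1) (-1) ^+ (k - 1) * 'C(n, k)%:R * Gmk m k].
Proof.
case: m => // m _; case: n => // n _ _ N HN.
split.
- rewrite /hypF (@sum_trunc R _ n.+1 N HN); last first.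
    by move=> i Hi; rewrite hyp12 bin_small // mulr0 mul0r.
  rewrite /Hbar (@swapL R n (fun j => 1 / (2 * j + 1)%:R ^+ s)).
  by apply: eq_bigr => i _; rewrite hyp12 expr1n.
- rewrite /hypF (@sum_trunc R _ n.+1 N HN); last first.
    by move=> i Hi; rewrite hyp12 bin_small // mulr0 mul0r.
  rewrite /Hbar_alt (@swapL R n (fun j => (-1) ^+ j / (2 * j + 1)%:R ^+ s)).
  by apply: eq_bigr => i _; rewrite hyp12.
- rewrite /hypF (@sum_trunc R _ n.+1 N HN); last first.
    by move=> i Hi; rewrite hyp3 bin_small // mul0r.
  have -> : (m.+1 + n.+1 - 1 = (m + n).+1)%N by lia.
  rewrite /Gmk (@swapL R n (fun j => 1 / (\prod_(1 <= i < m.+2) ((2 * j + i)%:R : R)))) /=.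
  rewrite (eq_bigr (fun i : 'I_n.+1 => (m + n).+1%:R * ('C(n, i)%:R * beta R i (m + n)))); last first.
    by move=> i _; rewrite hyp3; ring.
  rewrite -mulr_sumr -KL mulr_sumr [RHS]mulr_sumr.
  apply: eq_bigr => j _; rewrite -gbeta; ring.
Qed.
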